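(* Let $\alpha\in(1,\infty)\setminus\mathbb{N}$ and let $M_{0,\alpha}(X^n,P)=\sum_{x\in\mathcal{X}}p_x^{\alpha}I(F_x(X^n)=0)$. Then $$\sup_P E\big[(M_{0,\alpha}(X^n,P))^2\big]\le_n O\big(1/n^{2(\alpha-1)}\big),$$ the supremum being over all discrete distributions $P$.
   Context: $P$ is a discrete probability distribution on a countable alphabet $\mathcal{X}$, $p_x=P(x)$, and $X^n=(X_1,\ldots,X_n)$ are i.i.d. samples from $P$. $F_x(X^n)=\sum_{i=1}^n I(X_i=x)$ is the number of occurrences of $x$ in $X^n$, and $I(\cdot)$ is the indicator. For nonnegative sequences, $a_n\le_n b_n$ means $a_n\le b_n+o(b_n)$ as $n\to\infty$. *)

(* Defs.v *)
From HB Require Import structures.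
From mathcomp Require Import all_boot all_order all_algebra.
From mathcomp Require Import all_classical all_reals.
From mathcomp Require Import ereal topology normedtype sequences esum exp.
Set Implicit Arguments. Unset Strict Implicit. Unset Printing Implicit Defensive.
Import Order.TTheory GRing.Theory Num.Theory.
Local Open Scope classical_set_scope.
Local Open Scope ring_scope.

(* The countable alphabet is taken to be nat (any countable alphabet embeds
   into nat; symbols outside the embedding get probability 0). *)

Definition is_distr (R : realType) (p : nat -> R) : Prop :=
  (forall x, 0 <= p x) /\ (\esum_(x in [set: nat]) (p x)%:E = 1%E).

Definition occ (n : nat) (s : n.-tuple nat) (x : nat) : nat := count_mem x s.

Definition M0 (R : realType) (alpha : R) (p : nat -> R) (n : nat)
  (s : n.-tuple nat) : \bar R :=
  \esum_(x in [set: nat]) ((p x `^ alpha) * (occ s x == 0)%:R)%:E.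

Definition seq_prob (R : realType) (p : nat -> R) (n : nat)
  (s : n.-tuple nat) : R := \prod_(i <- s) p i.

Definition EM0sq (R : realType) (alpha : R) (p : nat -> R) (n : nat) : \bar R :=
  \esum_(s in [set: n.-tuple nat])
     ((seq_prob p s)%:E * (M0 alpha p s * M0 alpha p s))%E.

(* Main.v *)
Require Import Defs.
From HB Require Import structures.
From mathcomp Require Import all_boot all_order all_algebra.
From mathcomp Require Import all_classical all_reals.
From mathcomp Require Import ereal topology normedtype sequences esum exp.
Import Order.TTheory GRing.Theory Num.Theory.
Local Open Scope classical_set_scope.
Local Open Scope ring_scope.
Lemma pow_exp_bound (R : realType) (b t : R) : 0 < b -> 0 <= t ->
  t `^ b <= b `^ b * expR t.
Proof.
move=> b0 t0.
have -> : t = b * (t / b) by rewrite mulrC divfK// gt_eqF.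
rewrite powRM ?divr_ge0 ?(ltW b0)//.
rewrite ler_wpM2l ?powR_ge0//.
have h : t / b <= expR (t / b).
  by apply: le_trans (expR_ge1Dx _); rewrite lerDr.
rewrite (le_trans (ge0_ler_powR (ltW b0) _ _ h))//.
- by rewrite nnegrE divr_ge0// ltW.
- by rewrite nnegrE expR_ge0.
- by rewrite -expRM mulrC.
Qed.

Lemma key_real (R : realType) (b p : R) (n : nat) : 0 < b -> (0 < n)%N ->
  0 <= p -> p <= 1 ->
  p `^ b * (1 - p) ^+ n <= b `^ b / n%:R `^ b.
Proof.
move=> b0 n0 p0 p1.
have nR : 0 < (n%:R : R) by rewrite ltr0n.
have N0 : 0 < n%:R `^ b by rewrite powR_gt0.
case: (eqVneq p 0) => [->|pn0].
  by rewrite powR0 ?gt_eqF// mul0r divr_ge0// powR_ge0.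
have h1 : (1 - p) ^+ n <= expR (- p) ^+ n.
  rewrite lerXn2r// ?nnegrE ?subr_ge0 ?expR_ge0//.
  by apply: le_trans (expR_ge1Dx _); rewrite lerD.
rewrite -expRM_natr in h1.
set t := p * n%:R.
have ht : p `^ b * n%:R `^ b <= b `^ b * expR t.
  rewrite -powRM// ?(ltW nR)//.
  by apply: pow_exp_bound => //; rewrite mulr_ge0// ltW.
apply: (le_trans (ler_wpM2l (powR_ge0 _ _) h1)).
rewrite ler_pdivlMr// mulNr expRN -mulrA mulrC -mulrA ler_pdivrMl ?expR_gt0//.
by rewrite mulrC [X in _ <= X]mulrC.
Qed.

Section gen.
Context {R : realType}.
Local Open Scope ereal_scope.

Lemma esumZl (T : choiceType) (c : R) (a : T -> \bar R) :
  (0 <= c)%R -> (forall i, 0 <= a i) ->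
  \esum_(i in [set: T]) (c%:E * a i) = c%:E * \esum_(i in [set: T]) a i.
Proof.
move=> c0 a0; rewrite /esum -ereal_supZl//; last first.
  by apply/set0P; exists 0; exists set0; [exact: fsets_set0|rewrite fsbig_set0].
congr ereal_sup; apply/seteqP; split => x /=.
  by move=> [A hA <-]; exists (\sum_(i \in A) a i); [exists A|rewrite ge0_mule_fsumr].
by move=> [y [A hA <-] <-]; exists A => //; rewrite ge0_mule_fsumr.
Qed.

Lemma esumZr (T : choiceType) (c : R) (a : T -> \bar R) :
  (0 <= c)%R -> (forall i, 0 <= a i) ->
  \esum_(i in [set: T]) (a i * c%:E) = (\esum_(i in [set: T]) a i) * c%:E.
Proof.
move=> c0 a0; rewrite (muleC _ c%:E) -esumZl//; apply: eq_esum => i _; exact: muleC.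
Qed.

Lemma esum_swap (T1 T2 : choiceType) (a : T1 -> T2 -> \bar R) :
  (forall i j, 0 <= a i j) ->
  \esum_(i in [set: T1]) \esum_(j in [set: T2]) a i j =
  \esum_(j in [set: T2]) \esum_(i in [set: T1]) a i j.
Proof.
move=> a0; rewrite !esum_esum//.
rewrite (reindex_esum ([set: T2] `*`` (fun=> [set: T1])) ([set: T1] `*`` (fun=> [set: T2])) (fun k => (k.2, k.1)))//.
split.
- by move=> [x y].
- by move=> [x y] [x' y'] _ _ /= [-> ->].
- by move=> [x y] _; exists (y, x).
Qed.

Lemma esum_prod (T1 T2 : choiceType) (f : T1 -> R) (g : T2 -> R) :
  (forall i, 0 <= f i)%R -> (forall i, 0 <= g i)%R ->
  \esum_(j in [set: T2]) (g j)%:E \is a fin_num ->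
  ((\esum_(i in [set: T1]) (f i)%:E) * (\esum_(j in [set: T2]) (g j)%:E) =
  \esum_(i in [set: T1]) \esum_(j in [set: T2]) (f i * g j)%:E)%E.
Proof.
move=> f0 g0 fin.
have Eg : (0 <= fine (\esum_(j in [set: T2]) (g j)%:E))%R.
  by rewrite fine_ge0// esum_ge0// => j _; rewrite lee_fin.
rewrite -(fineK fin) -(esumZr _ _ (fun i => (f i)%:E) Eg); last by move=> i; rewrite lee_fin.
apply: eq_esum => i _; rewrite (fineK fin) -esumZl//.
Qed.

Lemma esum_pt (T : choiceType) (x : T) (f : T -> R) :
  (0 <= f x)%R ->
  \esum_(i in [set: T]) (f i * (i == x)%:R)%:E = (f x)%:E.
Proof.
move=> c0; rewrite -(@esum_set1 R T x (fun i => (f i)%:E)) ?lee_fin// [RHS]esum_mkcond.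
apply: eq_esum => i _; have [->|ne] := eqVneq i x; first by rewrite mem_set// mulr1.
by rewrite memNset ?mulr0// => /= ie; rewrite ie eqxx in ne.
Qed.


Lemma esum_tuple (g : nat -> R) n :
  (forall i, 0 <= g i)%R -> \esum_(i in [set: nat]) (g i)%:E \is a fin_num ->
  \esum_(s in [set: n.-tuple nat]) (\prod_(i <- s) g i)%:E =
  (\esum_(i in [set: nat]) (g i)%:E) ^+ n.
Proof.
move=> g0 fin; elim: n => [|n IH].
  rewrite expe0 (_ : [set: 0.-tuple nat] = [set [tuple]]); last first.
    by apply/seteqP; split => t //= _; rewrite [t]tuple0.
  by rewrite esum_set1 ?lee_fin ?big_nil.
rewrite (reindex_esum ([set: nat] `*`` (fun=> [set: n.-tuple nat])) [set: n.+1.-tuple nat]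
   (fun k => [tuple of k.1 :: k.2])); last first.
  split.
  - by [].
  - by move=> [x t] [x' t'] _ _ /= /(congr1 val) /= [-> /val_inj ->].
  - move=> t _; exists (thead t, behead_tuple t) => //=.
    by apply: val_inj => /=; rewrite [in RHS](tuple_eta t).
rewrite (eq_esum (b := fun k : nat * n.-tuple nat => (g k.1 * \prod_(i <- k.2) g i)%:E)); last first.
  by move=> [x t] _ /=; rewrite big_cons.
rewrite -(@esum_esum R _ _ [set: nat] (fun=> [set: n.-tuple nat])
  (fun x (t : n.-tuple nat) => (g x * \prod_(i <- t) g i)%:E)); last first.
  by move=> i j _ _; rewrite lee_fin mulr_ge0// prodr_ge0.
rewrite -esum_prod//; last by rewrite IH fin_numX.
  by rewrite IH expeS.
by move=> t; rewrite prodr_ge0.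
Qed.

End gen.

Lemma prod_neq (R : realType) (x : nat) (r : seq nat) :
  (\prod_(i <- r) ((i != x)%:R : R) = ((count_mem x r == 0)%:R : R))%R.
Proof.
elim: r => [|y r IH]; first by rewrite big_nil.
rewrite big_cons IH /=; case: (y =P x) => _ /=; first by rewrite mul0r.
by rewrite mul1r add0n.
Qed.


Section main.
Context {R : realType} (alpha : R) (p : nat -> R).
Hypotheses (ha : 1 < alpha) (p0 : forall x, 0 <= p x)
  (psum : (\esum_(x in [set: nat]) (p x)%:E = 1)%E).

Lemma p_le1 x : p x <= 1.
Proof.
rewrite -lee_fin -psum -(esum_pt _ x p (p0 x)); apply: le_esum => i _.
rewrite lee_fin; case: eqP => [->|_]; by rewrite ?mulr1 ?mulr0.
Qed.

Lemma pa_ge0 x : 0 <= p x `^ alpha.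
Proof. exact: powR_ge0. Qed.

Lemma pa_le x : p x `^ alpha <= p x.
Proof.
case: (eqVneq (p x) 0) => [->|pn]; first by rewrite powR0// gt_eqF// (lt_trans ltr01).
by apply: ge1r_powR; [rewrite lt0r pn p0 p_le1|exact: ltW].
Qed.

Definition I0 {n} (s : n.-tuple nat) x : R := (occ s x == 0)%:R.

Lemma I0_ge0 n (s : n.-tuple nat) x : 0 <= I0 s x.
Proof. by rewrite /I0; case: (_ == _). Qed.

Lemma M0_fin n (s : n.-tuple nat) : M0 alpha p s \is a fin_num.
Proof.
rewrite ge0_fin_numE; last by rewrite esum_ge0// => x _; rewrite lee_fin mulr_ge0// ?pa_ge0 ?I0_ge0.
apply: (le_lt_trans (y := 1%E)); last by rewrite ltry.
rewrite -psum; apply: le_esum => x _; rewrite lee_fin.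
apply: le_trans (pa_le x); rewrite -[leRHS]mulr1 ler_wpM2l ?pa_ge0//.
by case: (_ == _).
Qed.

End main.

Section main2.
Context {R : realType} (alpha : R) (p : nat -> R).
Hypotheses (ha : 1 < alpha) (p0 : forall x, 0 <= p x)
  (psum : (\esum_(x in [set: nat]) (p x)%:E = 1)%E).

Definition hh x y i : R := p i * (i != x)%:R * (i != y)%:R.

Lemma hh_ge0 x y i : 0 <= hh x y i.
Proof. by rewrite /hh !mulr_ge0// ?p0; case: (_ != _). Qed.

Lemma esum_hh x y : (\esum_(i in [set: nat]) (hh x y i)%:E =
  (if x == y then 1 - p x else 1 - p x - p y)%:E)%E.
Proof.
have pt z i : (0 <= (p i * (i == z)%:R)%:E)%E.
  by rewrite lee_fin mulr_ge0 ?p0//; case: (_ == _).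
have hg i : (0 <= (hh x y i)%:E)%E by rewrite lee_fin hh_ge0.
have ps := psum; case: (eqVneq x y) => [<-|nxy].
  rewrite (eq_esum (b := fun i => ((hh x x i)%:E + (p i * (i == x)%:R)%:E)%E)) in ps; last first.
    move=> i _; rewrite -EFinD /hh; congr (_%:E).
    by case: eqP => _ /=; rewrite ?mulr0 ?mulr1 ?addr0 ?add0r.
  rewrite esumD in ps; last 2 first.
  - by move=> i _; rewrite lee_fin hh_ge0.
  - by move=> i _; exact: pt.
  rewrite (esum_pt _ x p (p0 x)) in ps.
  rewrite -[LHS](addeK (x := (p x)%:E))// ps EFinB//.
rewrite (eq_esum (b := fun i => ((hh x y i)%:E + (p i * (i == x)%:R)%:E + (p i * (i == y)%:R)%:E)%E)) in ps; last first.
  move=> i _; rewrite -!EFinD /hh; congr (_%:E).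
  case: (eqVneq i x) => [->|nix]; first by rewrite (negPf nxy) /= ?mulr0 ?mulr1 ?add0r ?addr0.
  case: (eqVneq i y) => [->|niy]; by rewrite /= ?mulr0 ?mulr1 ?add0r ?addr0.
rewrite esumD in ps; last 2 first.
  - by move=> i _; rewrite adde_ge0.
  - by move=> i _; exact: pt.
rewrite esumD in ps; last 2 first.
  - by move=> i _; rewrite lee_fin hh_ge0.
  - by move=> i _; exact: pt.
rewrite (esum_pt _ x p (p0 x)) (esum_pt _ y p (p0 y)) in ps.
transitivity (\esum_(i in [set: nat]) (hh x y i)%:E + (p x)%:E + (p y)%:E - (p y)%:E - (p x)%:E)%E.
  by rewrite !addeK.
by rewrite ps -!EFinB addrAC.
Qed.

End main2.

From mathcomp Require Import ring lra.

Section main3.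
Context {R : realType} (alpha : R) (p : nat -> R).
Hypotheses (ha : 1 < alpha) (p0 : forall x, 0 <= p x)
  (psum : (\esum_(x in [set: nat]) (p x)%:E = 1)%E).

Local Notation a x := (p x `^ alpha).

Lemma EM0_eq n : EM0sq alpha p n =
  (\esum_(x in [set: nat]) \esum_(y in [set: nat])
    ((a x * a y)%:E * (\esum_(i in [set: nat]) (hh p x y i)%:E) ^+ n))%E.
Proof.
have aI0 (s : n.-tuple nat) x : 0 <= a x * I0 s x by rewrite mulr_ge0 ?powR_ge0 ?I0_ge0.
have sp0 (s : n.-tuple nat) : 0 <= seq_prob p s by rewrite prodr_ge0.
rewrite /EM0sq.
transitivity (\esum_(s in [set: n.-tuple nat]) \esum_(x in [set: nat]) \esum_(y in [set: nat])
   (seq_prob p s * ((a x * I0 s x) * (a y * I0 s y)))%:E)%E.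
  apply: eq_esum => s _; rewrite /M0 (esum_prod _ _ (fun x => a x * I0 s x) (fun y => a y * I0 s y))//; last first.
    exact: (M0_fin _ _ ha p0 psum).
  rewrite -esumZl//; last by move=> x; rewrite esum_ge0// => y _; rewrite lee_fin mulr_ge0.
  have E x : ((seq_prob p s)%:E * (\esum_(j in [set: nat]) (a x * I0 s x * (a j * I0 s j))%:E) =
     \esum_(y in [set: nat]) (seq_prob p s * (a x * I0 s x * (a y * I0 s y)))%:E)%E.
    by rewrite -esumZl// => y; rewrite lee_fin mulr_ge0.
  by apply: eq_esum => x _; exact: E.
  
have F0 (s : n.-tuple nat) x y : (0 <= (seq_prob p s * ((a x * I0 s x) * (a y * I0 s y)))%:E)%E.
  by rewrite lee_fin mulr_ge0// mulr_ge0.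
rewrite esum_swap; last by move=> s x; rewrite esum_ge0.
congr (esum _ _); apply: funext => x.
rewrite esum_swap//.
congr (esum _ _); apply: funext => y.
have hfin : (\esum_(i in [set: nat]) (hh p x y i)%:E)%E \is a fin_num by rewrite esum_hh.
rewrite -esum_tuple//; last exact: hh_ge0.
rewrite -esumZl//; last by move=> s; rewrite lee_fin prodr_ge0// => i _; exact: hh_ge0.
congr (esum _ _); apply: funext => s; congr (_%:E).
rewrite /hh /seq_prob !big_split /= !prod_neq /I0 /occ.
  ring.
by rewrite mulr_ge0 ?powR_ge0.
Qed.

End main3.

Section main4.
Context {R : realType} (alpha : R) (p : nat -> R).
Hypotheses (ha : 1 < alpha) (p0 : forall x, 0 <= p x)
  (psum : (\esum_(x in [set: nat]) (p x)%:E = 1)%E).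

Local Notation a x := (p x `^ alpha).
Let bb n x := a x * (1 - p x) ^+ n.
Let cc n x := a x * a x * (1 - p x) ^+ n.

Let p1 x : p x <= 1. Proof. exact: (p_le1 _ p0 psum). Qed.
Let bb_ge0 n x : 0 <= bb n x.
Proof. by rewrite /bb mulr_ge0 ?powR_ge0// exprn_ge0// subr_ge0. Qed.
Let cc_ge0 n x : 0 <= cc n x.
Proof. by rewrite /cc !mulr_ge0 ?powR_ge0// exprn_ge0// subr_ge0. Qed.

Lemma pt_bound n x y :
  ((a x * a y)%:E * (\esum_(i in [set: nat]) (hh p x y i)%:E) ^+ n <=
   (bb n x * bb n y + cc n x * (y == x)%:R)%:E)%E.
Proof.
have h0 : (0 <= \esum_(i in [set: nat]) (hh p x y i)%:E)%E.
  by rewrite esum_ge0// => i _; rewrite lee_fin hh_ge0.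
rewrite esum_hh// in h0 *.
case: (eqVneq x y) => [<-|nxy] /= in h0 *.
  rewrite -EFin_expe -EFinM lee_fin mulr1 /cc -mulrA.
  by rewrite lerDr mulr_ge0.
rewrite mulr0 addr0 -EFin_expe -EFinM lee_fin /bb.
rewrite lee_fin in h0.
have h1 : 1 - p x - p y <= (1 - p x) * (1 - p y).
  have := mulr_ge0 (p0 x) (p0 y); lra.
have h2 : (1 - p x - p y) ^+ n <= (1 - p x) ^+ n * (1 - p y) ^+ n.
  by rewrite -exprMn lerXn2r// nnegrE mulr_ge0// subr_ge0.
rewrite mulrACA ler_wpM2l// ?mulr_ge0// ?powR_ge0//.
Qed.


Let bb_le1 n x : bb n x <= p x.
Proof.
rewrite /bb; apply: le_trans (pa_le _ _ ha p0 psum x).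
rewrite -[leRHS]mulr1 ler_wpM2l ?powR_ge0// exprn_ile1// ?subr_ge0// ?lerBlDr ?lerDl; last exact: p0.
Qed.

Let esum_bb_fin n : (\esum_(x in [set: nat]) (bb n x)%:E)%E \is a fin_num.
Proof.
rewrite ge0_fin_numE; last by rewrite esum_ge0// => x _; rewrite lee_fin.
apply: (le_lt_trans (y := 1%E)); last by rewrite ltry.
by rewrite -psum; apply: le_esum => x _; rewrite lee_fin.
Qed.

Lemma sum_eq n :
  (\esum_(x in [set: nat]) \esum_(y in [set: nat]) (bb n x * bb n y + cc n x * (y == x)%:R)%:E =
  (\esum_(x in [set: nat]) (bb n x)%:E) * (\esum_(x in [set: nat]) (bb n x)%:E) +
  \esum_(x in [set: nat]) (cc n x)%:E)%E.
Proof.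
have inner x : (\esum_(y in [set: nat]) (bb n x * bb n y + cc n x * (y == x)%:R)%:E =
   \esum_(y in [set: nat]) (bb n x * bb n y)%:E + (cc n x)%:E)%E.
  rewrite (eq_esum (b := fun y => ((bb n x * bb n y)%:E + (cc n x * (y == x)%:R)%:E)%E)); last first.
    by move=> y _; rewrite EFinD.
  rewrite esumD; last 2 first.
  - by move=> y _; rewrite lee_fin mulr_ge0.
  - by move=> y _; rewrite lee_fin mulr_ge0//; case: (_ == _).
  by rewrite (esum_pt _ x (fun=> cc n x) (cc_ge0 n x)).
rewrite (eq_esum (b := fun x => (\esum_(y in [set: nat]) (bb n x * bb n y)%:E + (cc n x)%:E)%E)); last first.
  by move=> x _; exact: inner.
rewrite esumD; last 2 first.
- by move=> x _; rewrite esum_ge0// => y _; rewrite lee_fin mulr_ge0.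
- by move=> x _; rewrite lee_fin.
by rewrite esum_prod.
Qed.


Let b1 : 0 < alpha - 1. Proof. by rewrite subr_gt0. Qed.
Let b2 : 0 < 2 * (alpha - 1). Proof. by rewrite mulr_gt0. Qed.

Let bb_le n x : (0 < n)%N -> bb n x <= p x * ((alpha - 1) `^ (alpha - 1) / n%:R `^ (alpha - 1)).
Proof.
move=> n0; rewrite /bb -(mulr_powRB1 (p0 x) (lt_trans ltr01 ha)) -mulrA ler_wpM2l//.
by apply: key_real.
Qed.

Let cc_le n x : (0 < n)%N ->
  cc n x <= p x * ((2 * (alpha - 1)) `^ (2 * (alpha - 1)) / n%:R `^ (2 * (alpha - 1))).
Proof.
move=> n0; rewrite /cc.
have a0 : alpha + alpha != 0 by rewrite gt_eqF// addr_gt0// (lt_trans ltr01 ha).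
rewrite -powRD ?(negPf a0)//.
have -> : alpha + alpha = 2 + 2 * (alpha - 1) by ring.
rewrite powRD; last by rewrite gt_eqF// addr_gt0.
rewrite powR_mulrn// expr2 -!mulrA ler_wpM2l//.
apply: (le_trans (_ : _ <= 1 * (p x `^ (2 * (alpha - 1)) * (1 - p x) ^+ n))).
  by apply: ler_wpM2r; [rewrite mulr_ge0 ?powR_ge0// exprn_ge0// subr_ge0|exact: p1].
by rewrite mul1r; apply: key_real.
Qed.

Lemma main_bound n : (0 < n)%N ->
  (EM0sq alpha p n <= (((alpha - 1) `^ (alpha - 1) / n%:R `^ (alpha - 1)) ^+ 2 +
     (2 * (alpha - 1)) `^ (2 * (alpha - 1)) / n%:R `^ (2 * (alpha - 1)))%:E)%E.
Proof.
move=> n0; rewrite (EM0_eq _ _ ha p0 psum).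
set K1 := (_ / _).
set K2 := (_ / n%:R `^ (2 * (alpha - 1))).
have K10 : 0 <= K1 by rewrite divr_ge0// powR_ge0.
have K20 : 0 <= K2 by rewrite divr_ge0// powR_ge0.
apply: le_trans (_ : (\esum_(x in [set: nat]) \esum_(y in [set: nat])
   (bb n x * bb n y + cc n x * (y == x)%:R)%:E <= _)%E).
  by apply: le_esum => x _; apply: le_esum => y _; exact: pt_bound.
rewrite sum_eq EFinD leeD//.
  have h : (\esum_(x in [set: nat]) (bb n x)%:E <= K1%:E)%E.
    rewrite -[K1%:E]mule1 -psum -esumZl//.
    by apply: le_esum => x _; rewrite lee_fin mulrC bb_le.
  by rewrite expr2 EFinM lee_pmul// esum_ge0// => x _; rewrite lee_fin bb_ge0.
rewrite -[K2%:E]mule1 -psum -esumZl//.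
by apply: le_esum => x _; rewrite lee_fin mulrC cc_le.
Qed.

End main4.

Theorem lemma3 (R : realType) (alpha : R)
  (halpha1 : 1 < alpha) (halphaN : forall k : nat, alpha != k%:R) :
  exists C : R, 0 < C /\ exists N : nat, forall n : nat, (N <= n)%N ->
    forall p : nat -> R, is_distr p ->
      (EM0sq alpha p n <= (C / (n%:R `^ (2 * (alpha - 1))))%:E)%E.
Proof.
set K1 := (alpha - 1) `^ (alpha - 1).
set K2 := (2 * (alpha - 1)) `^ (2 * (alpha - 1)).
have K10 : 0 <= K1 by exact: powR_ge0.
have K20 : 0 <= K2 by exact: powR_ge0.
exists (K1 ^+ 2 + K2 + 1); split.
  by rewrite ltr_wpDl// addr_ge0// exprn_ge0.
exists 1%N => n n1 p [p0 psum].
apply: le_trans (main_bound _ _ halpha1 p0 psum _ n1) _.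
rewrite lee_fin -/K1 -/K2.
have N0 : 0 < n%:R `^ (alpha - 1) by rewrite powR_gt0// ltr0n.
rewrite [in n%:R `^ (2 * (alpha - 1))]mulrC powRrM powR_mulrn ?powR_ge0//.
rewrite expr_div_n -mulrDl ler_wpM2r ?invr_ge0 ?exprn_ge0 ?powR_ge0//.
by rewrite lerDl.
Qed.
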